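(* There is a function $f$ (on an interval of $\mathbb{R}^{\mathbb{Z}_<}$) such that, in $\mathbb{R}^{\mathbb{Z}_<}$, $f$ satisfies $\mathrm{ED}$ but does not have the extreme value property $\mathrm{EVP}$.
   Context: $\mathbb{R}^{\mathbb{Z}_<}$ is the set of formal series $\sum_{i\ge -k}a_i\epsilon^i$ ($k\in\mathbb{N}\cup\{0\}$, $a_i\in\mathbb{R}$), with coefficientwise addition, Cauchy-product multiplication and lexicographic order; $|\cdot|$ is the associated absolute value. $f$ satisfies $\mathrm{ED}$ iff at every point $\mathbf{c}$ of its domain, for every positive $\iota_1\in\mathbb{R}^{\mathbb{Z}_<}$ there is a positive $\iota_2\in\mathbb{R}^{\mathbb{Z}_<}$ with $|f(\mathbf{x})-f(\mathbf{c})|<\iota_1$ whenever $|\mathbf{x}-\mathbf{c}|<\iota_2$. For $f:I\to J$ with $I$ an interval, $f$ has $\mathrm{EVP}$ iff for all $a\le b$ in $I$ there is $x\in[a,b]$ with $f(y)\le f(x)$ for all $y\in[a,b]$. *)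

(* Defs.v *)
From Stdlib Require Import Reals ZArith Lia Lra ClassicalDescription.
Open Scope R_scope.

(** The field R^{Z_<} of formal series sum_{i >= -k} a_i eps^i:
    a coefficient function Z -> R whose support is bounded below. *)
Record LC := mkLC {
  coef : Z -> R ;
  coef_lb : exists k : Z, forall i : Z, (i < - k)%Z -> coef i = 0
}.

Definition LCeq (x y : LC) : Prop := forall i, coef x i = coef y i.

Lemma LCzero_lb : exists k : Z, forall i : Z, (i < - k)%Z -> (fun _ : Z => 0) i = 0.
Proof. exists 0%Z; reflexivity. Qed.
Definition LCzero : LC := mkLC (fun _ => 0) LCzero_lb.

Lemma LCadd_lb (x y : LC) :
  exists k : Z, forall i : Z, (i < - k)%Z -> (fun i => coef x i + coef y i) i = 0.
Proof.
  destruct (coef_lb x) as [kx Hx]; destruct (coef_lb y) as [ky Hy].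
  exists (Z.max kx ky); intros i Hi; simpl.
  rewrite Hx, Hy by lia; lra.
Qed.
Definition LCadd (x y : LC) : LC := mkLC _ (LCadd_lb x y).

Lemma LCopp_lb (x : LC) :
  exists k : Z, forall i : Z, (i < - k)%Z -> (fun i => - coef x i) i = 0.
Proof.
  destruct (coef_lb x) as [kx Hx]; exists kx; intros i Hi; simpl.
  rewrite Hx by lia; lra.
Qed.
Definition LCopp (x : LC) : LC := mkLC _ (LCopp_lb x).

Definition LCsub (x y : LC) : LC := LCadd x (LCopp y).

(** Cauchy product (not needed by the statement, included for completeness):
    (xy)_n = sum_{i = -kx}^{n + ky} x_i y_{n-i}, a finite sum. *)
Definition LCmul_coef (kx ky : Z) (x y : Z -> R) (n : Z) : R :=
  sum_f_R0 (fun j => x (Z.of_nat j - kx)%Z * y (n - (Z.of_nat j - kx))%Z)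
           (Z.to_nat (n + kx + ky)).

Definition LClt (x y : LC) : Prop :=
  exists n : Z, (forall j : Z, (j < n)%Z -> coef x j = coef y j) /\ coef x n < coef y n.

Definition LCle (x y : LC) : Prop := LClt x y \/ LCeq x y.

Definition LCabs (x : LC) : LC :=
  if excluded_middle_informative (LCle LCzero x) then x else LCopp x.

Definition is_interval (I : LC -> Prop) : Prop :=
  forall a b z, I a -> I b -> LCle a z -> LCle z b -> I z.

Definition ED (I : LC -> Prop) (f : LC -> LC) : Prop :=
  forall c, I c ->
  forall iota1, LClt LCzero iota1 ->
  exists iota2, LClt LCzero iota2 /\
    forall x, I x -> LClt (LCabs (LCsub x c)) iota2 ->
      LClt (LCabs (LCsub (f x) (f c))) iota1.

Definition EVP (I : LC -> Prop) (f : LC -> LC) : Prop :=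
  forall a b, I a -> I b -> LCle a b ->
  exists x, LCle a x /\ LCle x b /\
    forall y, LCle a y -> LCle y b -> LCle (f y) (f x).

(* Main.v *)
Require Import Defs.
From Stdlib Require Import Reals ZArith Lia Lra ClassicalDescription.
Open Scope R_scope.

Definition Kf (v : R) : Z -> R := fun i => if Z.eq_dec i 0 then v else 0.
Lemma K_lb (v : R) : exists k : Z, forall i : Z, (i < - k)%Z -> Kf v i = 0.
Proof. exists 0%Z; intros i Hi; unfold Kf; destruct (Z.eq_dec i 0); [lia|auto]. Qed.
Definition K (v : R) : LC := mkLC (Kf v) (K_lb v).

Definition h (t : R) : R := if Rlt_dec t 1 then t else 0.
Definition F (x : LC) : LC := K (h (coef x 0)).

Definition Ef : Z -> R := fun i => if Z.eq_dec i 1 then 1 else 0.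
Lemma E_lb : exists k : Z, forall i : Z, (i < - k)%Z -> Ef i = 0.
Proof. exists 0%Z; intros i Hi; unfold Ef; destruct (Z.eq_dec i 1); [lia|auto]. Qed.
Definition E : LC := mkLC Ef E_lb.

Lemma K_le (a b : R) : LCle (K a) (K b) -> a <= b.
Proof.
  intros [[n [H1 H2]]|H].
  - simpl in *; unfold Kf in *.
    destruct (Z.eq_dec n 0).
    + lra.
    + destruct (Z_lt_le_dec n 0). lra.
      assert (H3 := H1 0%Z ltac:(lia)). simpl in H3. lra.
  - assert (H3 := H 0%Z). simpl in H3; unfold Kf in H3. simpl in H3. lra.
Qed.

Lemma K_lt (a b : R) : a < b -> LCle (K a) (K b).
Proof.
  intros H; left; exists 0%Z; split.
  - intros j Hj; simpl; unfold Kf; destruct (Z.eq_dec j 0); [lia|auto].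
  - simpl; unfold Kf; simpl; lra.
Qed.

Lemma abs_zero (w i1 : LC) : (forall i, coef w i = 0) -> LClt LCzero i1 ->
  LClt (LCabs w) i1.
Proof.
  intros Hw [n [H1 H2]]; exists n; unfold LCabs;
  destruct (excluded_middle_informative (LCle LCzero w)); simpl in *; split;
  try intros j Hj; rewrite ?Hw; try rewrite <- H1 by lia; auto; lra.
Qed.

Lemma abs_small (z : LC) : LClt (LCabs z) E -> coef z 0 = 0.
Proof.
  intros [n [H1 H2]].
  assert (Hn : (1 <= n)%Z).
  { destruct (Z_lt_le_dec n 1) as [Hl|]; [|auto]. exfalso.
    unfold LCabs in *.
    destruct (excluded_middle_informative (LCle LCzero z)) as [Hz|Hz].
    - simpl in H2; unfold Ef in H2; destruct (Z.eq_dec n 1); [lia|].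
      assert (Hj : forall j, (j < n)%Z -> coef z j = 0).
      { intros j Hj; rewrite H1 by auto; simpl; unfold Ef;
        destruct (Z.eq_dec j 1); [lia|auto]. }
      destruct Hz as [[m [Hm1 Hm2]]|Hz].
      + simpl in *. destruct (Z.lt_total m n) as [Hl2|[->|Hl2]].
        * rewrite Hj in Hm2 by auto; lra.
        * lra.
        * rewrite <- Hm1 in H2 by auto; simpl in H2; lra.
      + rewrite <- Hz in H2; simpl in H2; lra.
    - apply Hz; left; exists n; simpl in *; split.
      + intros j Hj. assert (H3 := H1 j Hj). unfold Ef in H3.
        destruct (Z.eq_dec j 1); [lia|]. lra.
      + unfold Ef in H2; destruct (Z.eq_dec n 1); [lia|]. lra. }
  assert (H3 := H1 0%Z ltac:(lia)).
  unfold LCabs in H3; destruct (excluded_middle_informative (LCle LCzero z));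
  simpl in H3; unfold Ef in H3; simpl in H3; lra.
Qed.

Theorem mainTheorem6 :
  exists (I : LC -> Prop) (f : LC -> LC),
    is_interval I /\ ED I f /\ ~ EVP I f.
Proof.
  exists (fun _ => True), F; split; [|split].
  - intros a b z _ _ _ _; exact I.
  - intros c _ i1 Hi1; exists E; split.
    + exists 1%Z; split.
      * intros j Hj; simpl; unfold Ef; destruct (Z.eq_dec j 1); [lia|auto].
      * simpl; unfold Ef; simpl; lra.
    + intros x _ Hx. apply abs_zero; auto.
      apply abs_small in Hx. simpl in Hx.
      assert (Hc : coef x 0 = coef c 0) by lra.
      intros i; simpl; unfold F; simpl; rewrite Hc; lra.
  - intros Hev.
    destruct (Hev (K 0) (K 1) I I (K_lt 0 1 ltac:(lra))) as [x [_ [_ Hm]]].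
    set (u := h (coef x 0)).
    assert (Hu : u < 1) by (unfold u, h; destruct (Rlt_dec (coef x 0) 1); lra).
    set (t := (Rmax u 0 + 1) / 2).
    assert (Ht1 : 0 < t < 1) by (unfold t; unfold Rmax;
      destruct (Rle_dec u 0); lra).
    assert (Ht2 : u < t) by (unfold t; unfold Rmax; destruct (Rle_dec u 0); lra).
    assert (H := Hm (K t) (K_lt 0 t ltac:(lra)) (K_lt t 1 ltac:(lra))).
    apply K_le in H. unfold F in H. simpl in H.
    unfold Kf in H; simpl in H; unfold h at 1 in H; destruct (Rlt_dec t 1); [|lra].
    fold u in H; idtac; lra.
Qed.
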